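(* Let $g,h\in G(\Gamma)$ with $|h|_r=m$ and $|g|_r=n$. Then there exist integers $0\le q\le\min(m,n)$ and $0\le p\le\kappa$ and reduced words $g\equiv g_1\cdots g_n$, $h\equiv h_1\cdots h_m$ (with $g_i\in G_{v_i}$, $h_i\in G_{w_i}$) such that: $g_i=h_i$ for $1\le i\le q$; for $q<i\le q+p$ the syllables $g_i$ and $h_i$ lie in the same vertex group $G_{v_i}$ and $h_i\neq g_i$; the word $$h_m^{-1}\cdots h_{q+p+1}^{-1}\,(h_{q+1}^{-1}g_{q+1})\cdots(h_{q+p}^{-1}g_{q+p})\,g_{q+p+1}\cdots g_n$$ is a reduced word representing $h^{-1}g$ (each parenthesized product being a single syllable); and for all $1\le i,j\le p$ the vertex $v_{q+j}$ lies in $\mathrm{st}(v_{q+i})$, i.e. $g_{q+j},h_{q+j}\in G(\mathrm{st}(v_{q+i}))$.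
   Context: $\Gamma$ is a finite simplicial graph, $\{G_v\}_{v\in\Gamma}$ are groups, and $G(\Gamma)$ is their graph product: the quotient of $\ast_vG_v$ by the normal subgroup generated by $[G_v,G_w]$ for all edges $[vw]$ of $\Gamma$. Vertices joined by an edge are adjacent; $\mathrm{lk}(v)$ is the set of vertices adjacent to $v$, $\mathrm{st}(v)=\mathrm{lk}(v)\cup\{v\}$, and $G(\mathrm{lk}(v))$, $G(\mathrm{st}(v))$ denote the subgroups generated by the $G_w$ with $w$ in these sets. $\kappa$ is the maximal number of pairwise adjacent vertices of $\Gamma$. A word is a finite sequence $(g_1,\dots,g_n)$ with $g_i\in G_{v_i}$ (its syllables); it represents $g_1\cdots g_n$. Allowed moves: swapping two consecutive syllables from adjacent vertex groups (shuffle), multiplying two consecutive syllables from the same vertex group into one, deleting an identity syllable. A word is reduced if no sequence of moves shortens it. Every element has a reduced word and any two reduced words for the same element differ by shuffles; we write $g\equiv g_1\cdots g_n$ for a reduced word of $g$ and $|g|_r=n$ for the reduced word length. *)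

(* Defs.v *)
From HB Require Import structures.
From mathcomp Require Import all_boot all_order.
From Stdlib Require Import Relations.Relation_Operators.
From Stdlib Require List.
Set Implicit Arguments. Unset Strict Implicit. Unset Printing Implicit Defensive.

Record grp := Grp {
  gcarrier :> Type;
  gmul : gcarrier -> gcarrier -> gcarrier;
  gone : gcarrier;
  ginv : gcarrier -> gcarrier;
  gmulA : forall x y z, gmul x (gmul y z) = gmul (gmul x y) z;
  gmul1 : forall x, gmul gone x = x;
  gmulV : forall x, gmul (ginv x) x = gone
}.

Section GraphProduct.
Variables (V : finType) (adj : rel V) (G : V -> grp).

Definition syllable := {v : V & G v}.
Definition word := seq syllable.

Definition syl_inv (x : syllable) : syllable := existT _ (tag x) (ginv (tagged x)).
Definition winv (w : word) : word := rev (map syl_inv w).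

Inductive move : word -> word -> Prop :=
| move_shuffle (s t : word) (x y : syllable) :
    adj (tag x) (tag y) -> move (s ++ [:: x; y] ++ t) (s ++ [:: y; x] ++ t)
| move_merge (s t : word) (v : V) (a b : G v) :
    move (s ++ [:: existT _ v a; existT _ v b] ++ t) (s ++ [:: existT _ v (gmul a b)] ++ t)
| move_delete (s t : word) (v : V) :
    move (s ++ [:: existT _ v (gone (G v))] ++ t) (s ++ t).

(* Two words represent the same element of G(Gamma): equivalence closure of
   the moves (this is exactly equality in the graph product presentation). *)
Definition weq : word -> word -> Prop := clos_refl_sym_trans word move.

Definition reduced (w : word) : Prop :=
  forall w', clos_refl_trans word move w w' -> size w <= size w'.

Definition rlen (w : word) (n : nat) : Prop :=
  exists w', weq w w' /\ reduced w' /\ size w' = n.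

Definition in_star (v u : V) : bool := (u == v) || adj v u.

Definition clique (S : {set V}) : bool :=
  [forall x in S, forall y in S, (x != y) ==> adj x y].

Definition kappa : nat := \max_(S : {set V} | clique S) #|S|.

Definition spair := {v : V & (G v * G v)%type}.
Definition pfst (x : spair) : syllable := existT _ (tag x) (tagged x).1.
Definition psnd (x : spair) : syllable := existT _ (tag x) (tagged x).2.
Definition pquot (x : spair) : syllable :=
  existT _ (tag x) (gmul (ginv (tagged x).2) (tagged x).1).

End GraphProduct.

(* Main.v *)
Require Import Defs.
From HB Require Import structures.
From mathcomp Require Import all_boot all_order.
From Stdlib Require Import Relations.Relation_Operators Classical.
From Stdlib Require List.
Set Implicit Arguments. Unset Strict Implicit. Unset Printing Implicit Defensive.

Notation crt R := (clos_refl_trans _ R).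

Fixpoint reachT (V : eqType) (adj : rel V) (v : V) (s : seq V) : bool :=
  match s with
  | [::] => false
  | y :: t => (y == v) || adj v y && reachT adj v t
  end.

Fixpoint niceT (V : eqType) (adj : rel V) (s : seq V) : bool :=
  match s with
  | [::] => true
  | x :: t => ~~ reachT adj x t && niceT adj t
  end.

Fixpoint crossT (V : eqType) (adj : rel V) (u w : seq V) : bool :=
  match u with
  | [::] => true
  | x :: t => ~~ (all (adj x) t && reachT adj x w) && crossT adj t w
  end.

Lemma reachT_cat (V : eqType) (adj : rel V) v u w :
  reachT adj v (u ++ w) = reachT adj v u || all (adj v) u && reachT adj v w.
Proof.
elim: u => [|y u IH] //=; rewrite IH.
by case: (y == v); case: (adj v y); case: (reachT adj v u); case: (all _ u).
Qed.

Lemma reachT_intro (V : eqType) (adj : rel V) v B C :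
  all (adj v) B -> reachT adj v (B ++ v :: C).
Proof.
elim: B => [|y B IH] /=; first by rewrite eqxx.
by case/andP=> -> /IH ->; rewrite orbT.
Qed.

Lemma reachT_elim (V : eqType) (adj : rel V) (T : Type) (f : T -> V) v w :
  reachT adj v (map f w) ->
  exists B y C, w = B ++ y :: C /\ f y = v /\ all (adj v) (map f B).
Proof.
elim: w => [|x w IH] //=.
case: eqP => [E _|_ /= /andP [A R]].
  by exists [::], x, w.
have [B [y [C [-> [Ey HB]]]]] := IH R.
by exists (x :: B), y, C; rewrite /= A HB.
Qed.

Lemma niceT_cat (V : eqType) (adj : rel V) u w :
  niceT adj (u ++ w) = [&& niceT adj u, niceT adj w & crossT adj u w].
Proof.
elim: u => [|x u IH] /=; first by rewrite andbT.
rewrite IH reachT_cat negb_or.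
by case: (reachT adj x u); case: (all _ u && _); case: (niceT adj u);
  case: (niceT adj w); case: (crossT adj u w).
Qed.

Lemma niceT_elim (V : eqType) (adj : rel V) (T : Type) (f : T -> V) w :
  niceT adj (map f w) = false ->
  exists A a B b C, w = A ++ a :: B ++ b :: C /\ f a = f b /\
     all (adj (f a)) (map f B).
Proof.
elim: w => [|x w IH] //=.
case R: (reachT adj (f x) (map f w)) => /=.
  move=> _; have [B [y [C [-> [Ey HB]]]]] := reachT_elim R.
  by exists [::], x, B, y, C.
move/IH=> [A [a [B [b [C [-> H]]]]]].
by exists (x :: A), a, B, b, C.
Qed.

Lemma niceT_bad (V : eqType) (adj : rel V) A x B C :
  niceT adj (A ++ x :: B ++ x :: C) -> ~~ all (adj x) B.
Proof.
rewrite niceT_cat => /and3P [_ /= /andP [R _] _].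
by apply/negP => /(reachT_intro C); rewrite (negbTE R).
Qed.

Lemma rev5 (T : Type) (A : seq T) a B b C :
  rev (A ++ a :: B ++ b :: C) = rev C ++ b :: rev B ++ a :: rev A.
Proof.
rewrite !(rev_cat, rev_cons) -!cats1 -!catA. by [].
Qed.
Lemma dummy : True. Proof. by [].
Qed.

Lemma niceT_rev (V : eqType) (adj : rel V) s :
  niceT adj s -> niceT adj (rev s).
Proof.
move=> N; case E: (niceT adj (rev s)) => //.
have := @niceT_elim V adj V id (rev s); rewrite map_id => /(_ E).
move=> [A [a [B [b [C [E2 [Eab HB]]]]]]].
have : s = rev C ++ b :: rev B ++ a :: rev A by rewrite -rev5 -E2 revK.
rewrite map_id /= in HB.
move=> Es; move: N; rewrite Es /= -Eab => /niceT_bad.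
by rewrite all_rev HB.
Qed.

Lemma crossT_intro (V : eqType) (adj : rel V) u w :
  (forall A x B, u = A ++ x :: B -> all (adj x) B -> ~~ reachT adj x w) ->
  crossT adj u w.
Proof.
elim: u => [|x u IH] H //=.
apply/andP; split.
  apply/negP=> /andP [Al R]; by move: (H [::] x u erefl Al); rewrite R.
by apply: IH => A y B E; apply: (H (x :: A)); rewrite E.
Qed.

Lemma fin_nice (V : eqType) (adj : rel V) P M Gt Ht :
  niceT adj (P ++ M ++ Gt) -> niceT adj (P ++ M ++ Ht) ->
  pairwise adj M ->
  (forall u, reachT adj u Gt -> reachT adj u Ht -> ~~ all (adj u) M) ->
  niceT adj (rev Ht ++ M ++ Gt).
Proof.
move=> NG NH PW F.
have NMG : niceT adj (M ++ Gt) by move: NG; rewrite niceT_cat => /and3P [].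
have NMH : niceT adj (M ++ Ht) by move: NH; rewrite niceT_cat => /and3P [].
have NHt : niceT adj Ht by move: NMH; rewrite niceT_cat => /and3P [].
rewrite niceT_cat niceT_rev // NMG /=.
apply: crossT_intro => A x B E Al.
have EH : Ht = rev B ++ x :: rev A by rewrite -(revK Ht) E rev_cat rev_cons cat_rcons.
rewrite reachT_cat negb_or; apply/andP; split.
  apply/negP => R.
  have := @reachT_elim V adj V id x M; rewrite map_id => /(_ R).
  move=> [M1 [y [M2 [EM [Ey AM1]]]]]; rewrite /= in Ey; subst y.
  have := @niceT_bad V adj (P ++ M1) x (M2 ++ rev B) (rev A).
  have EE : P ++ M ++ Ht = (P ++ M1) ++ x :: (M2 ++ rev B) ++ x :: rev A.
    by rewrite EM EH -!catA.
  rewrite -EE => /(_ NH).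
  rewrite all_cat all_rev Al andbT.
  by move: PW; rewrite EM pairwise_cat /= => /and3P [_ _ /andP [-> _]].
apply/negP => /andP [AM RG].
have RH : reachT adj x Ht by rewrite EH reachT_intro // all_rev.
by move: (F x RG RH); rewrite AM.
Qed.


Lemma reachT_swap (V : eqType) (adj : rel V) a b c t :
  irreflexive adj -> symmetric adj -> adj a b ->
  reachT adj c [:: a, b & t] = reachT adj c [:: b, a & t].
Proof.
move=> irr sym ab /=.
case: (a =P c) => [<-|na]; case: (b =P c) => [eb|nb] //=.
- by rewrite ab orbT.
- by rewrite ab orbT.
- by subst b; rewrite sym ab.
- by case: (adj c a); case: (adj c b).
Qed.

Lemma crossT_ext (V : eqType) (adj : rel V) u w w' :
  (forall v, reachT adj v w = reachT adj v w') -> crossT adj u w = crossT adj u w'.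
Proof. by move=> E; elim: u => [|x u IH] //=; rewrite IH E. Qed.

Lemma niceT_swap (V : eqType) (adj : rel V) s a b t :
  irreflexive adj -> symmetric adj -> adj a b ->
  niceT adj (s ++ [:: a, b & t]) -> niceT adj (s ++ [:: b, a & t]).
Proof.
move=> irr sym ab; rewrite !niceT_cat (@crossT_ext _ _ s _ [:: b, a & t]);
  last by move=> v; apply: reachT_swap.
case/and3P => -> + -> /=; rewrite andbT.
have nab : (a == b) = false by apply/eqP => E; subst b; rewrite irr in ab.
have nba : (b == a) = false by rewrite eq_sym.
by rewrite /= nab nba [adj b a]sym ab /=; case/and3P => -> -> ->.
Qed.

Lemma gmulV' (g : grp) (x : g) : gmul x (ginv x) = gone g.
Proof.
rewrite -[gmul x (ginv x)]gmul1 -[in gmul (gone g) _](gmulV (ginv x)).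
by rewrite -gmulA [gmul (ginv x) (gmul x _)]gmulA gmulV gmul1 gmulV.
Qed.

Lemma gmul1' (g : grp) (x : g) : gmul x (gone g) = x.
Proof. by rewrite -(gmulV x) gmulA gmulV' gmul1. Qed.

Lemma quot_eq1 (g : grp) (a b : g) : gmul (ginv b) a = gone g -> a = b.
Proof.
move=> E; by rewrite -(gmul1 a) -(gmulV' b) -gmulA E gmul1'.
Qed.

Lemma inv_eq1 (g : grp) (a : g) : ginv a = gone g -> a = gone g.
Proof. by move=> E; symmetry; apply: quot_eq1; rewrite gmul1'. Qed.

Lemma move_catl (V : finType) (adj : rel V) (G : V -> grp) (p w w' : word G) :
  move adj w w' -> move adj (p ++ w) (p ++ w').
Proof.
case=> [s t x y H|s t v a b|s t v]; rewrite catA.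
- by rewrite [p ++ (s ++ _)]catA; apply: move_shuffle.
- by rewrite [p ++ (s ++ _)]catA; apply: move_merge.
- by rewrite [p ++ (s ++ _)]catA; apply: move_delete.
Qed.

Lemma crt_catl (V : finType) (adj : rel V) (G : V -> grp) (p w w' : word G) :
  crt (@move _ adj G) w w' -> crt (@move _ adj G) (p ++ w) (p ++ w').
Proof.
elim=> [x y H|x|x y z _ H1 _ H2].
- by apply: rt_step; apply: move_catl.
- by apply: rt_refl.
- by apply: rt_trans H2.
Qed.

Lemma shift_left (V : finType) (adj : rel V) (G : V -> grp) (S : word G) y T L :
  all (fun u => adj u (tag y)) (map tag S) ->
  crt (@move _ adj G) (L ++ S ++ y :: T) (L ++ y :: S ++ T).
Proof.
elim: S L => [|z S IH] L /=; first by move=> _; apply: rt_refl.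
case/andP=> Hz HS.
apply: rt_trans (_ : crt (@move _ adj G) _ ((L ++ [:: z]) ++ y :: S ++ T)) _.
  by rewrite -catA /=; move: (IH (L ++ [:: z]) HS); rewrite -!catA.
rewrite -catA /=; apply: rt_step.
by have := @move_shuffle V adj G L (S ++ T) z y Hz.
Qed.

Definition nonidw (V : finType) (G : V -> grp) (w : word G) : Prop :=
  forall x, List.In x w -> tagged x <> gone (G (tag x)).

Definition nice (V : finType) (adj : rel V) (G : V -> grp) (w : word G) : Prop :=
  nonidw w /\ niceT adj (map tag w).

Lemma nice_move (V : finType) (adj : rel V) (G : V -> grp) (w w' : word G) :
  symmetric adj -> irreflexive adj ->
  nice adj w -> move adj w w' -> nice adj w' /\ size w' = size w.
Proof.
move=> sym irr N M; destruct M as [s t x y H|s t v a b|s t v]; case: N => N1 N2.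
- split; last by rewrite !size_cat.
  split.
    move=> z Hz; apply: N1; move: Hz; rewrite !List.in_app_iff /=; tauto.
  by move: N2; rewrite !map_cat /=; apply: niceT_swap.
- move: N2; rewrite map_cat /= niceT_cat /= => /and3P [_ /andP [] ].
  by rewrite eqxx.
- by case: (N1 (existT _ v (gone (G v)))) => //; rewrite List.in_app_iff /=; tauto.
Qed.

Lemma nice_crt (V : finType) (adj : rel V) (G : V -> grp) (w w' : word G) :
  symmetric adj -> irreflexive adj ->
  crt (@move _ adj G) w w' -> nice adj w -> nice adj w' /\ size w' = size w.
Proof.
move=> sym irr; elim=> [x y H|x|x y z _ H1 _ H2] N.
- exact: nice_move.
- by [].
- have [N' E1] := H1 N; have [N'' E2] := H2 N'; by rewrite E2.
Qed.

Lemma nice_reduced (V : finType) (adj : rel V) (G : V -> grp) (w : word G) :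
  symmetric adj -> irreflexive adj -> nice adj w -> reduced adj w.
Proof.
by move=> sym irr N w' H; have [_ ->] := nice_crt sym irr H N.
Qed.

Lemma reduced_nice (V : finType) (adj : rel V) (G : V -> grp) (w : word G) :
  symmetric adj -> irreflexive adj -> reduced adj w -> nice adj w.
Proof.
move=> sym irr R; split.
  move=> x Hx E; have [l1 [l2 El]] := List.in_split x w Hx.
  move: E; case: x Hx El => v a /= _ El E; subst a.
  have := R (l1 ++ l2) (rt_step _ _ _ _ _).
  rewrite El => /(_ (@move_delete V adj G l1 l2 v)).
  by rewrite !size_cat /= addnS ltnn.
case N: (niceT adj (map tag w)) => //.
have [A [a [B [b [C [E [Eab HB]]]]]]] := niceT_elim N.
have H1 : crt (@move _ adj G) w ((A ++ [:: a]) ++ b :: B ++ C).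
  rewrite E -cat1s catA; apply: shift_left.
  by rewrite Eab in HB; rewrite (eq_all (a2:= adj (tag b))) // => u; rewrite sym.
have Sz : size w = (size A + size B + size C).+2.
  by rewrite E !size_cat /= !size_cat /=; rewrite !addnS addnA.
case: a b Eab H1 {E HB} => [va xa] [vb xb] /= Eab H1; subst vb.
have H2 := @move_merge V adj G A (B ++ C) va xa xb.
have H3 : crt (@move _ adj G) w (A ++ [:: existT _ va (gmul xa xb)] ++ B ++ C).
  apply: rt_trans H1 _; apply: rt_step; by rewrite -catA.
have := R _ H3; rewrite Sz (size_cat A) /= size_cat. by rewrite addnS addnA ltnn.
Qed.



Lemma winv_cons (V : finType) (G : V -> grp) (x : syllable G) w :
  winv (x :: w) = winv w ++ [:: syl_inv x].
Proof. by rewrite /winv /= rev_cons cats1. Qed.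

Lemma winv_cat (V : finType) (G : V -> grp) (a b : word G) :
  winv (a ++ b) = winv b ++ winv a.
Proof. by rewrite /winv map_cat rev_cat. Qed.

Lemma tag_winv (V : finType) (G : V -> grp) (w : word G) :
  map tag (winv w) = rev (map tag w).
Proof. by rewrite /winv map_rev -map_comp. Qed.

Lemma tag_pfst (V : finType) (G : V -> grp) (m : seq (spair G)) :
  map tag (map (@pfst V G) m) = map tag m.
Proof. by rewrite -map_comp. Qed.
Lemma tag_psnd (V : finType) (G : V -> grp) (m : seq (spair G)) :
  map tag (map (@psnd V G) m) = map tag m.
Proof. by rewrite -map_comp. Qed.
Lemma tag_pquot (V : finType) (G : V -> grp) (m : seq (spair G)) :
  map tag (map (@pquot V G) m) = map tag m.
Proof. by rewrite -map_comp. Qed.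

Lemma cancel_pre (V : finType) (adj : rel V) (G : V -> grp) (L pre X : word G) :
  crt (@move _ adj G) (L ++ winv pre ++ pre ++ X) (L ++ X).
Proof.
elim: pre => [|[v a] pre IH] /=; first by apply: rt_refl.
apply: rt_trans IH; rewrite winv_cons -catA /=.
apply: rt_trans (_ : crt (@move _ adj G) _
   ((L ++ winv pre) ++ [:: existT _ v (gone (G v))] ++ pre ++ X)) _.
  apply: rt_step; rewrite -(gmulV a) -!catA.
  have := @move_merge V adj G (L ++ winv pre) (pre ++ X) v (ginv a) a.
  by rewrite -!catA.
apply: rt_step; rewrite -catA.
have := @move_delete V adj G (L ++ winv pre) (pre ++ X) v.
by rewrite -!catA.
Qed.

Lemma cancel_mid (V : finType) (adj : rel V) (G : V -> grp) (L : word G) mid X :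
  symmetric adj -> pairwise adj (map tag mid) ->
  crt (@move _ adj G) (L ++ winv (map (@psnd V G) mid) ++ map (@pfst V G) mid ++ X)
      (L ++ map (@pquot V G) mid ++ X).
Proof.
move=> sym; elim: mid L => [|[v [a b]] mid IH] L /=; first by move=> _; apply: rt_refl.
case/andP => Hall Hpw.
rewrite winv_cons -catA /=.
apply: rt_trans (_ : crt (@move _ adj G) _
   ((L ++ winv (map (@psnd V G) mid)) ++ [:: existT _ v (gmul (ginv b) a)] ++
     map (@pfst V G) mid ++ X)) _.
  apply: rt_step.
  have := @move_merge V adj G (L ++ winv (map (@psnd V G) mid))
     (map (@pfst V G) mid ++ X) v (ginv b) a.
  by rewrite -!catA.
apply: rt_trans (_ : crt (@move _ adj G) _
   ((L ++ [:: existT _ v (gmul (ginv b) a)]) ++ winv (map (@psnd V G) mid) ++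
     map (@pfst V G) mid ++ X)) _.
  rewrite -!catA /=; apply: shift_left.
  rewrite tag_winv tag_psnd all_rev.
  by rewrite (eq_all (a2 := adj v)) // => u; rewrite sym.
by move: (IH (L ++ [:: existT _ v (gmul (ginv b) a)]) Hpw); rewrite -!catA.
Qed.

Lemma crt_weq (V : finType) (adj : rel V) (G : V -> grp) (w w' : word G) :
  crt (@move _ adj G) w w' -> weq adj w w'.
Proof.
elim=> [x y H|x|x y z _ H1 _ H2].
- by apply: rst_step.
- by apply: rst_refl.
- by apply: rst_trans H2.
Qed.

Lemma In_map (A B : Type) (f : A -> B) (s : seq A) z :
  List.In z (map f s) -> exists x, List.In x s /\ z = f x.
Proof.
elim: s => [|x s IH] //= [<-|H]; first by exists x; split; [left|].
by have [y [Hy ->]] := IH H; exists y; split; [right|].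
Qed.

Lemma In_rev (A : Type) (s : seq A) z : List.In z (rev s) -> List.In z s.
Proof.
elim: s => [|x s IH] //=; rewrite rev_cons -cats1 List.in_app_iff /=.
case=> [/IH|[<-|[]]]; tauto.
Qed.

Lemma In_tag (V : finType) (T : V -> Type) (s : seq {v : V & T v}) x :
  List.In x s -> tag x \in map tag s.
Proof.
elim: s => [|y s IH] //= [<-|H]; first by rewrite inE eqxx.
by rewrite inE IH ?orbT.
Qed.

Lemma pairwise_in (T : eqType) (r : rel T) s x y :
  pairwise r s -> x \in s -> y \in s -> x != y -> r x y || r y x.
Proof.
elim: s => [|z s IH] //=; case/andP=> Hz Hs.
rewrite !inE; case/orP=> [/eqP ->|Hx]; case/orP=> [/eqP ->|Hy].
- by rewrite eqxx.
- by move=> _; rewrite (allP Hz).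
- by move=> _; rewrite (allP Hz) ?orbT.
- exact: IH.
Qed.



Definition ginv_st (V : finType) (adj : rel V) (G : V -> grp) (g0 h0 : word G)
  (pre : word G) (mid : seq (spair G)) (gt ht : word G) : Prop :=
  crt (@move _ adj G) g0 (pre ++ map (@pfst V G) mid ++ gt) /\
  crt (@move _ adj G) h0 (pre ++ map (@psnd V G) mid ++ ht) /\
  pairwise adj (map tag mid) /\
  (forall x, List.In x mid -> (tagged x).2 <> (tagged x).1).

Lemma greedy_step (V : finType) (adj : rel V) (G : V -> grp) (g0 h0 : word G)
  pre mid gt ht u :
  symmetric adj ->
  ginv_st adj g0 h0 pre mid gt ht ->
  reachT adj u (map tag gt) -> reachT adj u (map tag ht) ->
  all (adj u) (map tag mid) ->
  exists pre' mid' gt' ht', ginv_st adj g0 h0 pre' mid' gt' ht' /\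
    size gt = (size gt').+1.
Proof.
move=> sym [Ig [Ih [Ipw Ine]]] Rg Rh Am.
have [B1 [[u1 b1] [C1 [Eg [Ey A1]]]]] := reachT_elim Rg.
have [B2 [[u2 a2] [C2 [Eh [Ex A2]]]]] := reachT_elim Rh.
move: Ey Ex => /= Ey Ex; subst u; subst u2; subst gt ht; clear Rg Rh.
have Sz : size (B1 ++ existT _ u1 b1 :: C1) = (size (B1 ++ C1)).+1.
  by rewrite !size_cat /= addnS.
have symall : forall s, all (adj u1) s -> all (fun v => adj v u1) s.
  by move=> s; rewrite (eq_all (a2 := adj u1)) // => v; rewrite sym.
case: (classic (b1 = a2)) => [E|NE].
- subst a2.
  exists (pre ++ [:: existT _ u1 b1]), mid, (B1 ++ C1), (B2 ++ C2); split => //.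
  split; [|split; [|split]] => //.
  + apply: rt_trans Ig _.
    have := @shift_left V adj G (map (@pfst V G) mid ++ B1) (existT _ u1 b1) C1 pre.
    rewrite -!catA /=; apply.
    by rewrite map_cat tag_pfst all_cat !symall.
  + apply: rt_trans Ih _.
    have := @shift_left V adj G (map (@psnd V G) mid ++ B2) (existT _ u1 b1) C2 pre.
    rewrite -!catA /=; apply.
    by rewrite map_cat tag_psnd all_cat !symall.
- exists pre, (rcons mid (existT _ u1 (b1, a2))), (B1 ++ C1), (B2 ++ C2); split => //.
  split; [|split; [|split]].
  + apply: rt_trans Ig _; rewrite map_rcons cat_rcons !catA.
    have := @shift_left V adj G B1 (existT _ u1 b1) C1 (pre ++ map (@pfst V G) mid).
    by rewrite -!catA /=; apply; apply: symall.
  + apply: rt_trans Ih _; rewrite map_rcons cat_rcons !catA.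
    have := @shift_left V adj G B2 (existT _ u1 a2) C2 (pre ++ map (@psnd V G) mid).
    by rewrite -!catA /=; apply; apply: symall.
  + by rewrite map_rcons pairwise_rcons Ipw symall.
  + move=> z; rewrite -cats1 List.in_app_iff /=; case=> [/Ine //|[<-|[]]] /=.
    by move=> E; apply: NE.
Qed.

Lemma greedy (V : finType) (adj : rel V) (G : V -> grp) (g0 h0 : word G) k :
  symmetric adj ->
  forall pre mid gt ht, size gt <= k ->
  ginv_st adj g0 h0 pre mid gt ht ->
  exists pre' mid' gt' ht', ginv_st adj g0 h0 pre' mid' gt' ht' /\
   (forall u, reachT adj u (map tag gt') -> reachT adj u (map tag ht') ->
      ~~ all (adj u) (map tag mid')).
Proof.
move=> sym; elim: k => [|k IH] pre mid gt ht Hs I.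
  exists pre, mid, gt, ht; split => // u.
  by case: gt Hs {I}.
case: (classic (exists u, [&& reachT adj u (map tag gt), reachT adj u (map tag ht)
          & all (adj u) (map tag mid)])) => [[u /and3P [R1 R2 A]]|N].
  have [pre' [mid' [gt' [ht' [I' S']]]]] := greedy_step sym I R1 R2 A.
  by apply: (IH pre' mid' gt' ht') => //; move: Hs; rewrite S'.
exists pre, mid, gt, ht; split => // u R1 R2; apply/negP => A.
by apply: N; exists u; rewrite R1 R2 A.
Qed.


Theorem mainTheorem4 (V : finType) (adj : rel V)
  (adj_sym : symmetric adj) (adj_irr : irreflexive adj)
  (G : V -> grp) (g h : word G) (m n : nat) :
  rlen adj h m -> rlen adj g n ->
  exists (q p : nat) (pre : word G) (mid : seq (spair G)) (gt ht : word G),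
    let gs := pre ++ map (@pfst V G) mid ++ gt in
    let hs := pre ++ map (@psnd V G) mid ++ ht in
    (q <= minn m n /\ p <= kappa adj /\ size pre = q /\ size mid = p) /\
    (size gs = n /\ size hs = m /\ reduced adj gs /\ reduced adj hs /\
     weq adj g gs /\ weq adj h hs) /\
    (forall x, List.In x mid -> (tagged x).2 <> (tagged x).1) /\
    (reduced adj (winv ht ++ map (@pquot V G) mid ++ gt) /\
     weq adj (winv hs ++ gs) (winv ht ++ map (@pquot V G) mid ++ gt)) /\
    (forall x y, List.In x mid -> List.In y mid -> in_star adj (tag x) (tag y)).
Proof.
move=> [h0 [Wh [Rh Sh]]] [g0 [Wg [Rg Sg]]].
have Ng0 := reduced_nice adj_sym adj_irr Rg.
have Nh0 := reduced_nice adj_sym adj_irr Rh.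
have I0 : ginv_st adj g0 h0 [::] [::] g0 h0.
  by split; [apply: rt_refl|split; [apply: rt_refl|split]].
have [pre [mid [gt [ht [[Ig [Ih [Ipw Ine]]] F]]]]] :=
  greedy (k := size g0) adj_sym (leqnn _) I0.
exists (size pre), (size mid), pre, mid, gt, ht => /=.
have [NG SG] := nice_crt adj_sym adj_irr Ig Ng0.
have [NH SH] := nice_crt adj_sym adj_irr Ih Nh0.
rewrite Sg in SG; rewrite Sh in SH.
have Mpw := Ipw.
have Uq : uniq (map tag mid) by apply: pairwise_uniq Ipw.
split.
  split.
    by rewrite leq_min -SG -SH !size_cat !leq_addr.
  split; last by split.
  pose S := [set x in map tag mid].
  have CS : #|S| = size mid by rewrite cardsE (card_uniqP Uq) size_map.
  rewrite -CS /kappa; apply: leq_bigmax_cond.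
  apply/forallP => x; apply/implyP; rewrite inE => Hx.
  apply/forallP => y; apply/implyP; rewrite inE => Hy; apply/implyP => Nxy.
  by case/orP: (pairwise_in Ipw Hx Hy Nxy) => //; rewrite adj_sym.
split.
  split; first by [].
  split; first by [].
  split; first by apply: nice_reduced.
  split; first by apply: nice_reduced.
  split; first by apply: rst_trans Wg (crt_weq Ig).
  by apply: rst_trans Wh (crt_weq Ih).
split; first by [].
split.
  split.
  + apply: nice_reduced => //; split.
      move=> z; rewrite !List.in_app_iff; case=> [|[]].
      * move=> Hz; have [x [Hx Ez]] := In_map (In_rev Hz); subst z => /= E.
        apply: (proj1 NH x _ (inv_eq1 E)); rewrite !List.in_app_iff; tauto.
      * move=> Hz; have [x [Hx Ez]] := In_map Hz; subst z => /= E.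
        by apply: (Ine x Hx); rewrite (quot_eq1 E).
      * by move=> Hz; apply: (proj1 NG); rewrite !List.in_app_iff; tauto.
    rewrite !map_cat tag_winv tag_pquot.
    apply: (@fin_nice _ adj (map tag pre)) => //.
      by move: (proj2 NG); rewrite !map_cat tag_pfst.
    by move: (proj2 NH); rewrite !map_cat tag_psnd.
  + apply: crt_weq; rewrite !winv_cat -!catA.
    have := @cancel_pre V adj G (winv ht ++ winv (map (@psnd V G) mid)) pre
      (map (@pfst V G) mid ++ gt).
    rewrite -!catA => H1; apply: rt_trans H1 _.
    by apply: cancel_mid.
  move=> x y Hx Hy; rewrite /in_star.
  case: eqP => //= /eqP Nxy.
  have Nxy' : tag x != tag y by rewrite eq_sym.
  case/orP: (pairwise_in Ipw (In_tag Hx) (In_tag Hy) Nxy') => //.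
  by rewrite adj_sym.
Qed.
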